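(* Let $H$ and $G$ be groups. The relation $\approx_2$ is an equivalence relation on $\mathrm{Crossed}(H,G)$; two normalized crossed systems $(\alpha,f)$, $(\alpha',f')$ satisfy $(\alpha,f)\approx_2(\alpha',f')$ if and only if they are isomorphic objects of $\mathcal{E}_2(H,G)$. Consequently there is a bijection between the set of objects of a skeleton of $\mathcal{E}_2(H,G)$ (i.e. the set of isomorphism classes of objects of $\mathcal{E}_2(H,G)$) and the quotient set $\mathrm{Crossed}(H,G)/\!\approx_2$.
   Context: For groups $H,G$ and a map $\alpha:G\to\mathrm{Aut}(H)$ write $g\triangleright h:=\alpha(g)(h)$ (and $g\triangleright' h:=\alpha'(g)(h)$). A normalized crossed system is a quadruple $(H,G,\alpha,f)$ with maps $\alpha:G\to\mathrm{Aut}(H)$, $f:G\times G\to H$, $f(1,1)=1$, such that for all $g_1,g_2,g_3\in G$, $h\in H$: (WA) $g_1\triangleright(g_2\triangleright h)=f(g_1,g_2)\big((g_1g_2)\triangleright h\big)f(g_1,g_2)^{-1}$ and (CC) $f(g_1,g_2)f(g_1g_2,g_3)=\big(g_1\triangleright f(g_2,g_3)\big)f(g_1,g_2g_3)$. $\mathrm{Crossed}(H,G)$ denotes the set of pairs $(\alpha,f)$ such that $(H,G,\alpha,f)$ is a normalized crossed system. The crossed product $H\#_\alpha^f G$ is the group on the set $H\times G$ with multiplication $(h_1,g_1)\cdot(h_2,g_2)=\big(h_1(g_1\triangleright h_2)f(g_1,g_2),g_1g_2\big)$ and unit $(1,1)$; let $i_H(h)=(h,1)$, $\pi_G(h,g)=g$.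 The category $\mathcal{E}_2(H,G)$ has object set $\mathrm{Crossed}(H,G)$, and a morphism $(\alpha,f)\to(\alpha',f')$ is a triple $(\eta,\psi,\gamma)$ of group homomorphisms $\eta:H\to H$, $\psi:H\#_\alpha^f G\to H\#_{\alpha'}^{f'}G$, $\gamma:G\to G$ with $\psi\circ i_H=i'_H\circ\eta$ and $\pi'_G\circ\psi=\gamma\circ\pi_G$; composition is componentwise. Define $(\alpha,f)\approx_2(\alpha',f')$ if there exist group isomorphisms $\eta:H\to H$, $\gamma:G\to G$ and a map $t:G\to H$ such that for all $h\in H$, $g,g_1,g_2\in G$: $g\triangleright' h=\eta\big(t(g)(\gamma^{-1}(g)\triangleright\eta^{-1}(h))t(g)^{-1}\big)$ and $f'(g_1,g_2)=\eta\big(t(g_1)(\gamma^{-1}(g_1)\triangleright t(g_2))f(\gamma^{-1}(g_1),\gamma^{-1}(g_2))t(g_1g_2)^{-1}\big)$. *)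

(* Defs.v *)
From Stdlib Require Import RelationClasses.

Record Group := {
  carrier :> Type;
  gmul : carrier -> carrier -> carrier;
  gone : carrier;
  ginv : carrier -> carrier;
  gmulA : forall x y z, gmul x (gmul y z) = gmul (gmul x y) z;
  gmul1l : forall x, gmul gone x = x;
  gmul1r : forall x, gmul x gone = x;
  gmulVl : forall x, gmul (ginv x) x = gone;
  gmulVr : forall x, gmul x (ginv x) = gone
}.

Arguments gmul {_}. Arguments gone {_}. Arguments ginv {_}.

Definition is_hom (A B : Group) (phi : A -> B) : Prop :=
  forall x y, phi (gmul x y) = gmul (phi x) (phi y).

Definition is_aut (H : Group) (a : H -> H) : Prop :=
  is_hom H H a /\ (exists b : H -> H, (forall x, b (a x) = x) /\ (forall x, a (b x) = x)).

Definition is_crossed (H G : Group) (alpha : G -> H -> H) (f : G -> G -> H) : Prop :=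
  (forall g, is_aut H (alpha g)) /\
  f gone gone = gone /\
  (forall g1 g2 h, alpha g1 (alpha g2 h) =
      gmul (gmul (f g1 g2) (alpha (gmul g1 g2) h)) (ginv (f g1 g2))) /\
  (forall g1 g2 g3, gmul (f g1 g2) (f (gmul g1 g2) g3) =
      gmul (alpha g1 (f g2 g3)) (f g1 (gmul g2 g3))).

Definition Crossed (H G : Group) : Type :=
  { p : (G -> H -> H) * (G -> G -> H) | is_crossed H G (fst p) (snd p) }.

Definition cr_alpha {H G} (c : Crossed H G) : G -> H -> H := fst (proj1_sig c).
Definition cr_f {H G} (c : Crossed H G) : G -> G -> H := snd (proj1_sig c).

Definition cp_mul {H G : Group} (c : Crossed H G) (x y : H * G) : H * G :=
  let (h1, g1) := x in let (h2, g2) := y in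
  (gmul (gmul h1 (cr_alpha c g1 h2)) (cr_f c g1 g2), gmul g1 g2).

Definition E2_mor {H G : Group} (c c' : Crossed H G)
  (eta : H -> H) (psi : H * G -> H * G) (gamma : G -> G) : Prop :=
  is_hom H H eta /\ is_hom G G gamma /\
  (forall x y, psi (cp_mul c x y) = cp_mul c' (psi x) (psi y)) /\
  (forall h, psi (h, gone) = (eta h, gone)) /\
  (forall x, snd (psi x) = gamma (snd x)).

Definition E2_iso {H G : Group} (c c' : Crossed H G) : Prop :=
  exists (eta : H -> H) (psi : H * G -> H * G) (gamma : G -> G)
         (eta' : H -> H) (psi' : H * G -> H * G) (gamma' : G -> G),
    E2_mor c c' eta psi gamma /\ E2_mor c' c eta' psi' gamma' /\
    (forall h, eta' (eta h) = h) /\ (forall h, eta (eta' h) = h) /\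
    (forall x, psi' (psi x) = x) /\ (forall x, psi (psi' x) = x) /\
    (forall g, gamma' (gamma g) = g) /\ (forall g, gamma (gamma' g) = g).

Definition approx2 {H G : Group} (c c' : Crossed H G) : Prop :=
  exists (eta etai : H -> H) (gamma gammai : G -> G) (t : G -> H),
    is_hom H H eta /\ is_hom G G gamma /\
    (forall h, etai (eta h) = h) /\ (forall h, eta (etai h) = h) /\
    (forall g, gammai (gamma g) = g) /\ (forall g, gamma (gammai g) = g) /\
    (forall g h, cr_alpha c' g h =
       eta (gmul (gmul (t g) (cr_alpha c (gammai g) (etai h))) (ginv (t g)))) /\
    (forall g1 g2, cr_f c' g1 g2 =
       eta (gmul (gmul (gmul (t g1) (cr_alpha c (gammai g1) (t g2)))
                       (cr_f c (gammai g1) (gammai g2)))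
                 (ginv (t (gmul g1 g2))))).

Definition classes {X : Type} (R : X -> X -> Prop) : Type :=
  { P : X -> Prop | exists x, forall y, P y <-> R x y }.

Definition bijective_map {A B : Type} (F : A -> B) : Prop :=
  exists F' : B -> A, (forall a, F' (F a) = a) /\ (forall b, F (F' b) = b).

(* Main.v *)
Require Import Defs.
From Stdlib Require Import RelationClasses ProofIrrelevance Setoid.

Section GL.
Variable A : Group.
Lemma mul_cancel_l (x y z : A) : gmul x y = gmul x z -> y = z.
Proof. intro E. rewrite <- (gmul1l A y), <- (gmul1l A z), <- (gmulVl A x), <- !gmulA, E. reflexivity. Qed.
Lemma mulg_left_eq (b x a : A) : gmul b x = a -> x = gmul (ginv b) a.
Proof. intro E. rewrite <- E, gmulA, gmulVl, gmul1l. reflexivity. Qed.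
Lemma inv_uniq (x y : A) : gmul x y = gone -> y = ginv x.
Proof. intro E. apply mulg_left_eq in E. rewrite E, gmul1r. reflexivity. Qed.
Lemma gmulK (a x : A) : gmul (gmul a x) (ginv x) = a.
Proof. rewrite <- gmulA, gmulVr, gmul1r. reflexivity. Qed.
Lemma gmulVK (a x : A) : gmul (gmul a (ginv x)) x = a.
Proof. rewrite <- gmulA, gmulVl, gmul1r. reflexivity. Qed.
Lemma ginv_mul (x y : A) : ginv (gmul x y) = gmul (ginv y) (ginv x).
Proof. symmetry; apply inv_uniq. rewrite gmulA, gmulK, gmulVr. reflexivity. Qed.
Lemma ginv_inv (x : A) : ginv (ginv x) = x.
Proof. symmetry; apply inv_uniq. apply gmulVl. Qed.
Lemma ginv1 : ginv (@gone A) = gone.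
Proof. symmetry; apply inv_uniq. apply gmul1l. Qed.
Lemma idem1 (x : A) : gmul x x = x -> x = gone.
Proof. intro E. apply (mul_cancel_l x). rewrite E, gmul1r. reflexivity. Qed.
End GL.

Ltac gsimpl := repeat progress (rewrite ?gmulA, ?gmulK, ?gmulVK, ?gmul1l, ?gmul1r,
   ?gmulVl, ?gmulVr, ?ginv_mul, ?ginv_inv, ?ginv1).

Lemma hom_one (A B : Group) (phi : A -> B) : is_hom A B phi -> phi gone = gone.
Proof. intro Hp. red in Hp. apply idem1. rewrite <- Hp, gmul1l. reflexivity. Qed.
Lemma hom_inv (A B : Group) (phi : A -> B) : is_hom A B phi -> forall x, phi (ginv x) = ginv (phi x).
Proof. intros Hp x. pose proof Hp as Hq. red in Hp. apply inv_uniq. rewrite <- Hp, gmulVr. apply hom_one; exact Hq. Qed.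

Lemma inv_morph {X Y : Type} (mX : X -> X -> X) (mY : Y -> Y -> Y) (phi : X -> Y) (psi : Y -> X) :
  (forall x y, phi (mX x y) = mY (phi x) (phi y)) -> (forall x, psi (phi x) = x) ->
  (forall y, phi (psi y) = y) -> forall x y, psi (mY x y) = mX (psi x) (psi y).
Proof. intros Hm H1 H2 x y. rewrite <- (H2 x) at 1. rewrite <- (H2 y) at 1. rewrite <- Hm, H1. reflexivity. Qed.

Section CR.
Variables (H G : Group) (c : Crossed H G).
Lemma alpha_aut g : is_aut H (cr_alpha c g).
Proof. exact (proj1 (proj2_sig c) g). Qed.
Lemma f11 : cr_f c gone gone = gone.
Proof. exact (proj1 (proj2 (proj2_sig c))). Qed.
Lemma WA g1 g2 h : cr_alpha c g1 (cr_alpha c g2 h) =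
      gmul (gmul (cr_f c g1 g2) (cr_alpha c (gmul g1 g2) h)) (ginv (cr_f c g1 g2)).
Proof. exact (proj1 (proj2 (proj2 (proj2_sig c))) g1 g2 h). Qed.
Lemma CC g1 g2 g3 : gmul (cr_f c g1 g2) (cr_f c (gmul g1 g2) g3) =
      gmul (cr_alpha c g1 (cr_f c g2 g3)) (cr_f c g1 (gmul g2 g3)).
Proof. exact (proj2 (proj2 (proj2 (proj2_sig c))) g1 g2 g3). Qed.
Lemma alpha_mul g x y : cr_alpha c g (gmul x y) = gmul (cr_alpha c g x) (cr_alpha c g y).
Proof. exact (proj1 (alpha_aut g) x y). Qed.
Lemma alpha_inv g x : cr_alpha c g (ginv x) = ginv (cr_alpha c g x).
Proof. apply hom_inv. exact (proj1 (alpha_aut g)). Qed.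
Lemma alpha_1 g : cr_alpha c g gone = gone.
Proof. apply hom_one. exact (proj1 (alpha_aut g)). Qed.
Lemma alpha_one h : cr_alpha c gone h = h.
Proof.
  destruct (alpha_aut gone) as [_ [b [Hb _]]].
  pose proof (WA gone gone h) as E. rewrite f11, gmul1l, ginv1, gmul1r, gmul1l in E.
  apply (f_equal b) in E. rewrite !Hb in E. exact E.
Qed.
Lemma f_g1 g : cr_f c g gone = gone.
Proof.
  pose proof (CC g gone gone) as E. rewrite !gmul1r, f11, alpha_1, gmul1l in E.
  apply idem1; exact E.
Qed.
Lemma f_1g g : cr_f c gone g = gone.
Proof.
  pose proof (CC gone gone g) as E. rewrite !gmul1l, f11, alpha_one, gmul1l in E.
  apply idem1; symmetry; exact E.
Qed.
End CR.

Lemma approx_to_iso H G (c c' : Crossed H G) : approx2 c c' -> E2_iso c c'.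
Proof.
  intros (eta & etai & gamma & gammai & t & Heta & Hgam & He1 & He2 & Hg1 & Hg2 & Ha & Hf).
  assert (gam1 : gamma gone = gone) by (apply hom_one; exact Hgam).
  pose proof Heta as Heta0. red in Heta, Hgam.
  assert (gami1 : gammai gone = gone) by (rewrite <- gam1 at 1; apply Hg1).
  assert (eta1 : eta gone = gone) by (apply hom_one; exact Heta0).
  assert (etai1 : etai gone = gone) by (rewrite <- eta1 at 1; apply He1).
  assert (t1 : t gone = gone).
  { pose proof (Hf gone gone) as E. rewrite f11, gami1, f11, alpha_one, gmul1l, gmul1r in E.
    rewrite gmulK in E. apply (f_equal etai) in E. rewrite etai1, He1 in E. symmetry; exact E. }
  set (psi := fun x : H * G => (eta (gmul (fst x) (ginv (t (gamma (snd x))))), gamma (snd x))).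
  set (psi' := fun x : H * G => (gmul (etai (fst x)) (t (snd x)), gammai (snd x))).
  assert (Hpsi : forall x y, psi (cp_mul c x y) = cp_mul c' (psi x) (psi y)).
  { intros [h1 g1] [h2 g2]. unfold psi, cp_mul; simpl.
    rewrite Ha, Hf, !Hg1, !He1, Hgam. f_equal. rewrite <- !Heta. f_equal.
    rewrite alpha_mul, alpha_inv. gsimpl. reflexivity. }
  assert (P1 : forall x, psi' (psi x) = x).
  { intros [h g]. unfold psi, psi'; simpl. rewrite He1, Hg1, gmulVK. reflexivity. }
  assert (P2 : forall x, psi (psi' x) = x).
  { intros [h g]. unfold psi, psi'; simpl. rewrite Hg2, gmulK, He2. reflexivity. }
  exists eta, psi, gamma, etai, psi', gammai.
  split; [|split; [|repeat split; assumption]].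
  - split; [exact Heta|]. split; [exact Hgam|]. split; [exact Hpsi|]. split.
    + intro h. unfold psi; simpl. rewrite gam1, t1, ginv1, gmul1r. reflexivity.
    + intro x; reflexivity.
  - split; [intros x y; apply (inv_morph _ _ eta etai); assumption|].
    split; [intros x y; apply (inv_morph _ _ gamma gammai); assumption|].
    split; [apply (inv_morph _ _ psi psi'); assumption|]. split.
    + intro h. unfold psi'; simpl. rewrite t1, gmul1r, gami1. reflexivity.
    + intro x; reflexivity.
Qed.

Lemma iso_to_approx H G (c c' : Crossed H G) : E2_iso c c' -> approx2 c c'.
Proof.
  intros (eta & psi & gamma & eta' & psi' & gamma' & [Heta [Hgam [Hpsi [Hpsi1 Hpsi2]]]]
          & [Heta' [Hgam' [Hpsi' _]]] & He1 & He2 & Hp1 & Hp2 & Hg1 & Hg2).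
  assert (gam1 : gamma gone = gone) by (apply hom_one; exact Hgam).
  pose proof Heta as Heta0. red in Heta, Hgam'.
  set (w := fun g => eta' (fst (psi (gone, g)))).
  assert (Hw : forall g, fst (psi (gone, g)) = eta (w g)) by (intro; unfold w; rewrite He2; reflexivity).
  assert (Hform : forall h g, psi (h, g) = (eta (gmul h (w g)), gamma g)).
  { intros h g.
    assert (E : (h, g) = cp_mul c (h, gone) (gone, g)).
    { unfold cp_mul. rewrite alpha_one, f_1g, !gmul1r, gmul1l. reflexivity. }
    rewrite E, Hpsi, Hpsi1, (surjective_pairing (psi (gone, g))), Hw, Hpsi2. simpl.
    unfold cp_mul. rewrite alpha_one, f_1g, gmul1r, gmul1l, <- Heta. reflexivity. }
  assert (w1 : w gone = gone).
  { pose proof (Hform gone gone) as E. rewrite Hpsi1 in E. injection E as E1 _.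
    rewrite gmul1l in E1. apply (f_equal eta') in E1. rewrite !He1 in E1. symmetry; exact E1. }
  assert (KE : forall h1 g1 h2 g2,
    eta (gmul (gmul (gmul h1 (cr_alpha c g1 h2)) (cr_f c g1 g2)) (w (gmul g1 g2))) =
    gmul (gmul (eta (gmul h1 (w g1))) (cr_alpha c' (gamma g1) (eta (gmul h2 (w g2)))))
         (cr_f c' (gamma g1) (gamma g2))).
  { intros h1 g1 h2 g2. pose proof (Hpsi (h1, g1) (h2, g2)) as E.
    cbv beta iota delta [cp_mul] in E. rewrite !Hform in E.
    cbv beta iota delta [cp_mul] in E. injection E as E1 _. exact E1. }
  assert (KA : forall g1 h2, cr_alpha c' (gamma g1) (eta h2) =
                eta (gmul (gmul (ginv (w g1)) (cr_alpha c g1 h2)) (w g1))).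
  { intros g1 h2. pose proof (KE gone g1 h2 gone) as E.
    rewrite (f_g1 _ _ c), !gmul1r, w1, gmul1r, gam1, (f_g1 _ _ c'), gmul1r, !gmul1l in E.
    symmetry in E. apply mulg_left_eq in E. rewrite E, <- hom_inv, <- Heta, gmulA by exact Heta0.
    reflexivity. }
  assert (KF : forall g1 g2, cr_f c' (gamma g1) (gamma g2) =
     eta (gmul (gmul (gmul (ginv (w g1)) (cr_alpha c g1 (ginv (w g2)))) (cr_f c g1 g2)) (w (gmul g1 g2)))).
  { intros g1 g2. pose proof (KE gone g1 (ginv (w g2)) g2) as E.
    rewrite gmul1l, gmulVl, (hom_one _ _ eta Heta0), (alpha_1 _ _ c'), gmul1r, gmul1l in E.
    symmetry in E. apply mulg_left_eq in E. rewrite E, <- hom_inv, <- Heta by exact Heta0.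
    gsimpl. reflexivity. }
  exists eta, eta', gamma, gamma', (fun g => ginv (w (gamma' g))).
  split; [exact Heta0|]. split; [exact Hgam|]. split; [exact He1|]. split; [exact He2|].
  split; [exact Hg1|]. split; [exact Hg2|]. split.
  - intros g h. rewrite <- (Hg2 g) at 1. rewrite <- (He2 h) at 1. rewrite KA.
    rewrite ginv_inv. reflexivity.
  - intros g1 g2. rewrite <- (Hg2 g1) at 1. rewrite <- (Hg2 g2) at 1. rewrite KF.
    rewrite Hgam', ginv_inv. reflexivity.
Qed.

Lemma E2_mor_comp H G (c1 c2 c3 : Crossed H G) e1 p1 g1 e2 p2 g2 :
  E2_mor c1 c2 e1 p1 g1 -> E2_mor c2 c3 e2 p2 g2 ->
  E2_mor c1 c3 (fun x => e2 (e1 x)) (fun x => p2 (p1 x)) (fun x => g2 (g1 x)).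
Proof.
  intros [A1 [B1 [C1 [D1 E1]]]] [A2 [B2 [C2 [D2 E2]]]].
  split; [intros x y; rewrite A1, A2; reflexivity|].
  split; [intros x y; rewrite B1, B2; reflexivity|].
  split; [intros x y; rewrite C1, C2; reflexivity|].
  split; [intros h; rewrite D1, D2; reflexivity|].
  intros x; rewrite E2, E1; reflexivity.
Qed.

Lemma E2_iso_equiv H G : Equivalence (@E2_iso H G).
Proof.
  constructor.
  - intro c. exists (fun x => x), (fun x => x), (fun x => x), (fun x => x), (fun x => x), (fun x => x).
    assert (M : E2_mor c c (fun x => x) (fun x => x) (fun x => x)).
    { repeat split; intros; reflexivity. }
    split; [exact M|]. split; [exact M|]. repeat split.
  - intros c c' (e & p & g & e' & p' & g' & M & M' & X1 & X2 & X3 & X4 & X5 & X6).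
    exists e', p', g', e, p, g. split; [exact M'|]. split; [exact M|]. repeat split; assumption.
  - intros c1 c2 c3 (e & p & g & e' & p' & g' & M & M' & X1 & X2 & X3 & X4 & X5 & X6)
      (f & q & k & f' & q' & k' & N & N' & Y1 & Y2 & Y3 & Y4 & Y5 & Y6).
    exists (fun x => f (e x)), (fun x => q (p x)), (fun x => k (g x)),
           (fun x => e' (f' x)), (fun x => p' (q' x)), (fun x => g' (k' x)).
    split; [eapply E2_mor_comp; eassumption|].
    split; [eapply E2_mor_comp; eassumption|].
    repeat split; intros; simpl; congruence.
Qed.

Definition conv {X : Type} (R S : X -> X -> Prop) (h : forall x y, R x y <-> S x y)
  (P : classes R) : classes S :=
  exist _ (proj1_sig P)
   (match proj2_sig P with ex_intro _ x Hx => ex_intro _ x (fun y => iff_trans (Hx y) (h x y)) end).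

Lemma conv_conv {X : Type} (R S : X -> X -> Prop) h h' (P : classes R) :
  conv S R h' (conv R S h P) = P.
Proof. destruct P as [P pf]. unfold conv; simpl. f_equal. apply proof_irrelevance. Qed.

Theorem theorem3p6 (H G : Group) :
  Equivalence (@approx2 H G) /\
  (forall c c' : Crossed H G, approx2 c c' <-> E2_iso c c') /\
  (exists F : classes (@E2_iso H G) -> classes (@approx2 H G), bijective_map F).
Proof.
  assert (I : forall c c' : Crossed H G, approx2 c c' <-> E2_iso c c').
  { intros; split; [apply approx_to_iso|apply iso_to_approx]. }
  assert (I' : forall c c' : Crossed H G, E2_iso c c' <-> approx2 c c').
  { intros; symmetry; apply I. }
  destruct (E2_iso_equiv H G) as [Rf Sy Tr].
  split; [|split; [exact I|]].
  - constructor.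
    + intro c; apply I; apply Rf.
    + intros x y Hxy; apply I; apply Sy; apply I; exact Hxy.
    + intros x y z A B; apply I; eapply Tr; apply I; eassumption.
  - exists (conv _ _ I'). exists (conv _ _ I).
    split; intro; apply conv_conv.
Qed.
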